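(* Assume the MDP satisfies the low-rank assumption with parameter $d$. For any two policies $\pi^\theta,\pi^\beta$ and all $t\ge2$ (with $t\le H$), \[ \big\|(\mu_t^{\pi^\theta}\mathbf 1^\top)\circ\pi^\theta_t-(\mu_t^{\pi^\beta}\mathbf 1^\top)\circ\pi^\theta_t\big\|_{\mathrm{op}}\le\sqrt{dS^2A}\,\big\|d_{t-1}^{\pi^\beta}-d_{t-1}^{\pi^\theta}\big\|_{\mathrm{op}}. \]
   Context: MDP: finite state space $\mathcal S$ ($S=|\mathcal S|$), finite action space $\mathcal A$ ($A=|\mathcal A|$), horizon $H$, transitions $P_t(\cdot\mid s,a)$, initial distribution $\mu_1$. For a policy $\pi=\{\pi_t\}$: $s_1\sim\mu_1$, $a_t\sim\pi_t(\cdot\mid s_t)$, $s_{t+1}\sim P_t(\cdot\mid s_t,a_t)$; $\mu_t^\pi(s)=\Pr_\pi(s_t=s)$ (a vector in $\mathbb R^S$), $d_t^\pi(s,a)=\Pr_\pi(s_t=s,a_t=a)$ and $\pi_t$ (entries $\pi_t(a\mid s)$) are viewed as $S\times A$ matrices; $\mathbf 1\in\mathbb R^A$ is the all-ones vector; $\circ$ is the entrywise product; $\|\cdot\|_{\mathrm{op}}$ the spectral norm. Low-rank assumption with parameter $d$: with $d'=\lfloor d/2\rfloor$, for each $t$ either $P_t(s'\mid s,a)=\sum_{i=1}^{d'}u_{t,i}(s',s)w_{t,i}(a)$ for all $s',s,a$, or $P_t(s'\mid s,a)=\sum_{i=1}^{d'}u_{t,i}(s)w_{t,i}(s',a)$ for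 all $s',s,a$ (and each reward has rank at most $d'$). *)

(* Defs.v *)
From HB Require Import structures.
From mathcomp Require Import all_boot all_order all_algebra.
From mathcomp Require Import boolp classical_sets reals.
Set Implicit Arguments. Unset Strict Implicit. Unset Printing Implicit Defensive.
Import Order.TTheory GRing.Theory Num.Theory.
Local Open Scope ring_scope.
Local Open Scope classical_set_scope.

Section MDP.
Variables (R : realType) (S A : finType).

(* Transition kernels: [P t s a s'] = P_t(s' | s, a).
   Policies: [pi t s a] = pi_t(a | s).  Initial distribution [mu1 s]. *)

Definition is_distr (T : finType) (p : T -> R) :=
  (forall x, 0 <= p x) /\ \sum_x p x = 1.

Definition is_kernel (P : nat -> S -> A -> S -> R) :=
  forall t s a, is_distr (P t s a).

Definition is_policy (pi : nat -> S -> A -> R) :=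
  forall t s, is_distr (pi t s).

(* [mu_rec n] = mu_{n+1}: state-occupancy distribution at (1-based) time n+1. *)
Fixpoint mu_rec (P : nat -> S -> A -> S -> R) (mu1 : S -> R)
    (pi : nat -> S -> A -> R) (n : nat) : S -> R :=
  match n with
  | 0 => mu1
  | n'.+1 => fun s' =>
      \sum_s \sum_a mu_rec P mu1 pi n' s * pi n'.+1 s a * P n'.+1 s a s'
  end.

Definition occ_mu P mu1 pi (t : nat) : S -> R := mu_rec P mu1 pi t.-1.

Definition occ_d P mu1 pi (t : nat) : S -> A -> R :=
  fun s a => occ_mu P mu1 pi t s * pi t s a.

Definition opnorm (M : S -> A -> R) : R :=
  sup [set Num.sqrt (\sum_s (\sum_a M s a * x a) ^+ 2) |
        x in [set x : A -> R | \sum_a x a ^+ 2 <= 1]].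

Definition low_rank_at (d : nat) (P : nat -> S -> A -> S -> R) (t : nat) :=
  (exists (u : 'I_(d./2) -> S -> S -> R) (w : 'I_(d./2) -> A -> R),
      forall s' s a, P t s a s' = \sum_i u i s' s * w i a)
  \/
  (exists (u : 'I_(d./2) -> S -> R) (w : 'I_(d./2) -> S -> A -> R),
      forall s' s a, P t s a s' = \sum_i u i s * w i s' a).

End MDP.

(* Main.v *)
Require Import Defs.
From HB Require Import structures.
From mathcomp Require Import all_boot all_order all_algebra.
From mathcomp Require Import boolp classical_sets reals.
From mathcomp Require Import ring lra.
Import Order.TTheory GRing.Theory Num.Theory.
Local Open Scope ring_scope.

Section Aux.
Variable R : realType.

Lemma le_sum1 (I : finType) (F : I -> R) i :
  (forall j, 0 <= F j) -> F i <= \sum_j F j.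
Proof.
move=> h; rewrite (bigD1 i) //= lerDl; exact: sumr_ge0.
Qed.

Lemma sq_le (y m : R) : `|y| <= m -> y ^+ 2 <= m ^+ 2.
Proof.
move=> h; rewrite -real_normK ?num_real // !expr2.
by apply: ler_pM => //; apply: le_trans h.
Qed.

Lemma l2_le_l1 (I : finType) (y : I -> R) :
  Num.sqrt (\sum_i y i ^+ 2) <= \sum_i `|y i|.
Proof.
have h0 : 0 <= \sum_i `|y i| by apply: sumr_ge0.
rewrite -(ger0_norm h0) -sqrtr_sqr ler_sqrt; last exact: sqr_ge0.
rewrite [X in _ <= X]expr2 big_distrl /=; apply: ler_sum => i _.
rewrite -real_normK ?num_real // expr2; apply: ler_wpM2l => //.
exact: (@le_sum1 I (fun j => `|y j|) i (fun j => normr_ge0 _)).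
Qed.

Lemma abs_le1 (I : finType) (x : I -> R) a :
  \sum_i x i ^+ 2 <= 1 -> `|x a| <= 1.
Proof.
move=> h; rewrite -sqrtr_sqr -sqrtr1 ler_sqrt //.
apply: le_trans h; apply: (@le_sum1 I (fun j => x j ^+ 2) a) => j; exact: sqr_ge0.
Qed.

Variables (S A : finType).

Lemma opnorm_ub (M : S -> A -> R) (B : R) :
  (forall x : A -> R, \sum_a x a ^+ 2 <= 1 ->
     Num.sqrt (\sum_s (\sum_a M s a * x a) ^+ 2) <= B) ->
  opnorm M <= B.
Proof.
move=> hB; apply: ge_sup.
  exists (Num.sqrt (\sum_s (\sum_a M s a * (fun _ => 0 : R) a) ^+ 2)).
  exists (fun _ => 0) => //=.
  by rewrite big1 // => a _; rewrite expr2 mulr0.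
by move=> y [x hx <-]; exact: hB.
Qed.

Lemma opnorm_lb (M : S -> A -> R) (x : A -> R) :
  \sum_a x a ^+ 2 <= 1 ->
  Num.sqrt (\sum_s (\sum_a M s a * x a) ^+ 2) <= opnorm M.
Proof.
move=> hx; apply: ub_le_sup; last by exists x.
exists (Num.sqrt (\sum_s (\sum_a `|M s a|) ^+ 2)).
move=> y [z hz <-]; rewrite ler_sqrt; last by apply: sumr_ge0 => s _; exact: sqr_ge0.
apply: ler_sum => s _; apply: sq_le.
apply: le_trans (ler_norm_sum _ _ _) _; apply: ler_sum => a _.
rewrite normrM -[X in _ <= X]mulr1; apply: ler_wpM2l => //.
exact: abs_le1.
Qed.

Lemma opnorm_ge0 (M : S -> A -> R) : 0 <= opnorm M.
Proof.
apply: le_trans (@opnorm_lb M (fun _ => 0) _).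
  exact: sqrtr_ge0.
by rewrite big1 // => a _; rewrite expr2 mulr0.
Qed.

End Aux.

Theorem lemma7 (R : realType) (S A : finType) (H d : nat)
    (P : nat -> S -> A -> S -> R) (mu1 : S -> R)
    (pi_theta pi_beta : nat -> S -> A -> R) (t : nat) :
  is_kernel P -> is_distr mu1 ->
  (forall k, (1 <= k <= H)%N -> low_rank_at d P k) ->
  is_policy pi_theta -> is_policy pi_beta ->
  (2 <= t <= H)%N ->
  opnorm (fun s a =>
      occ_mu P mu1 pi_theta t s * pi_theta t s a
      - occ_mu P mu1 pi_beta t s * pi_theta t s a)
  <= Num.sqrt ((d * #|S| ^ 2 * #|A|)%:R)
     * opnorm (fun s a =>
         occ_d P mu1 pi_beta (t.-1) s a - occ_d P mu1 pi_theta (t.-1) s a).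
Proof.
move=> hP hmu hlr hth hbe.
case: t => [|[|t']] // Ht.
pose mth := mu_rec P mu1 pi_theta t'.
pose mbe := mu_rec P mu1 pi_beta t'.
pose pth := pi_theta t'.+1.
pose pbe := pi_beta t'.+1.
pose Pt := P t'.+1.
pose q := pi_theta t'.+2.
pose D := fun s a => mbe s * pbe s a - mth s * pth s a.
pose mth2 := fun s' => \sum_s \sum_a mth s * pth s a * Pt s a s'.
pose mbe2 := fun s' => \sum_s \sum_a mbe s * pbe s a * Pt s a s'.
change (opnorm (fun s a => mth2 s * q s a - mbe2 s * q s a) <=
  Num.sqrt ((d * #|S| ^ 2 * #|A|)%:R) * opnorm D).
pose del := fun s => mth2 s - mbe2 s.
have op0 : 0 <= opnorm D := @opnorm_ge0 R S A D.
have st1 : opnorm (fun s a => mth2 s * q s a - mbe2 s * q s a) <= \sum_s `|del s|.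
  apply: opnorm_ub => x hx.
  apply: le_trans (@l2_le_l1 R S del); rewrite ler_sqrt; last first.
    by apply: sumr_ge0 => s _; exact: sqr_ge0.
  apply: ler_sum => s _; rewrite -(real_normK (num_real (del s))); apply: sq_le.
  have -> : \sum_a (mth2 s * q s a - mbe2 s * q s a) * x a = del s * \sum_a q s a * x a.
    by rewrite big_distrr; apply: eq_bigr => a _ /=; rewrite /del; ring.
  rewrite normrM -[X in _ <= X]mulr1; apply: ler_wpM2l => //.
  apply: le_trans (ler_norm_sum _ _ _) _.
  have [hq0 hq1] := hth t'.+2 s.
  rewrite -hq1; apply: ler_sum => a _.
  rewrite normrM ger0_norm // -[X in _ <= X]mulr1; apply: ler_wpM2l => //.
  exact: abs_le1.
have st2 : \sum_s `|del s| <= \sum_s \sum_a `|D s a|.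
  have e1 : forall s', del s' = \sum_s \sum_a - (D s a * Pt s a s').
    move=> s'; rewrite /del /mth2 /mbe2 -sumrB; apply: eq_bigr => s _.
    rewrite -sumrB; apply: eq_bigr => a _; rewrite /D; ring.
  have e2 : forall s', `|del s'| <= \sum_s \sum_a `|D s a| * Pt s a s'.
    move=> s'; rewrite e1; apply: le_trans (ler_norm_sum _ _ _) _.
    apply: ler_sum => s _; apply: le_trans (ler_norm_sum _ _ _) _.
    apply: ler_sum => a _; rewrite normrN normrM (ger0_norm (proj1 (hP _ _ _) _)) //.
  apply: le_trans (ler_sum _ (fun s' _ => e2 s')) _.
  rewrite exchange_big /=; apply: ler_sum => s _.
  rewrite exchange_big /=; apply: ler_sum => a _.
  by rewrite -big_distrr /= (proj2 (hP _ _ _)) mulr1.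
have st3 : forall s, \sum_a `|D s a| <= Num.sqrt (#|A|%:R) * opnorm D.
  move=> s.
  have [hA|hA] := posnP #|A|.
    rewrite big1 ?mulr_ge0 ?sqrtr_ge0 // => a _.
    by have := card0_eq hA a; rewrite !inE.
  set c := Num.sqrt (#|A|%:R).
  have c0 : 0 < c by rewrite sqrtr_gt0 ltr0n.
  pose x := fun a => Num.sg (D s a) / c.
  have hx : \sum_a x a ^+ 2 <= 1.
    apply: (@le_trans _ _ (\sum_(a : A) c^-1 ^+ 2)).
      apply: ler_sum => a _; rewrite /x expr_div_n -[X in _ <= X]mul1r.
      rewrite -exprVn; apply: ler_wpM2r; first by rewrite exprVn invr_ge0 exprn_ge0 // ltW.
      rewrite -real_normK ?num_real // normr_sg; by case: (D s a != 0); rewrite ?expr1n ?expr0n.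
    have hc2 : c ^+ 2 = #|A|%:R by rewrite /c sqr_sqrtr ?ler0n.
    rewrite sumr_const (_ : #|xpredT| = #|A|) // -mulr_natr exprVn hc2 mulVf //.
    by rewrite pnatr_eq0 -lt0n.
  have := @opnorm_lb R S A D x hx.
  have e : \sum_a D s a * x a = (\sum_a `|D s a|) / c.
    rewrite big_distrl; apply: eq_bigr => a _ /=; rewrite /x normrEsg; ring.
  move=> h; rewrite -ler_pdivrMl //; apply: le_trans h.
  apply: le_trans (_ : `|\sum_a D s a * x a| <= _).
    by rewrite e mulrC ger0_norm // divr_ge0 ?sumr_ge0 // ltW.
  rewrite -sqrtr_sqr ler_sqrt; last by apply: sumr_ge0 => ? _; exact: sqr_ge0.
  by apply: (@le_sum1 R S (fun s0 => (\sum_a D s0 a * x a) ^+ 2) s) => ?; exact: sqr_ge0.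
have st4 : \sum_s \sum_a `|D s a| <= #|S|%:R * Num.sqrt (#|A|%:R) * opnorm D.
  apply: le_trans (ler_sum _ (fun s _ => st3 s)) _.
  by rewrite sumr_const -(mulr_natl (Num.sqrt (#|A|%:R) * opnorm D)) mulrA.
apply: le_trans st1 _; apply: le_trans st2 _; apply: le_trans st4 _.
apply: ler_wpM2r => //.
have [hS|hS] := posnP #|S|; first by rewrite hS mul0r sqrtr_ge0.
have [hA|hA] := posnP #|A|; first by rewrite hA sqrtr0 mulr0 sqrtr_ge0.
have hd : (0 < d)%N.
  rewrite lt0n; apply/eqP => d0; subst d.
  have [s0 _] := card_gt0P hS.
  have [a0 _] := card_gt0P hA.
  have hk : (0 < t'.+1 <= H)%N by move: Ht => /andP [_ h]; rewrite /= ltnW.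
  have := proj2 (hP t'.+1 s0 a0).
  case: (hlr _ hk) => [[u [w hu]]|[u [w hu]]];
    (rewrite big1 => [|s' _]; [by move/esym/eqP; rewrite oner_eq0 | by rewrite hu big_ord0]).
rewrite !natrM -expr2 sqrtrM ?mulr_ge0 ?ler0n // sqrtrM ?ler0n // sqrtr_sqr ger0_norm ?ler0n //.
rewrite -mulrA ler_peMl ?mulr_ge0 ?sqrtr_ge0 ?ler0n //.
have h1 : (1 : R) <= d%:R by rewrite ler1n.
have e := @sqr_sqrtr R (d%:R) (ler0n R d).
have g := sqrtr_ge0 (d%:R : R).
set z := Num.sqrt _ in e g *; set y := d%:R in h1 e *.
nra.
Qed.
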